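(* Let $g(x)=\sum_{n\ge0}g_nx^n$ be the unique formal power series with $g(0)=1$ satisfying $$g(x)=\frac{1}{1-\frac{x}{1-x}-x^2 g(x)},$$ equivalently $g(x)=\frac{1-2x-\sqrt{1-4x+8x^3-4x^4}}{2x^2(1-x)}$ (so $g_n$ begins $1,1,3,7,19,51,143,407,\dots$). Let $h_n=\det\left(g_{i+j}\right)_{0\le i,j\le n}$ be its Hankel transform. Then for all $n\ge0$, $$h_n=2^{\lfloor (n+1)^2/4\rfloor}.$$ In particular $h_n=4\,h_{n-2}^2/h_{n-4}$ for all $n\ge4$.
   Context: The Hankel transform of a sequence $(g_n)_{n\ge0}$ is the sequence $h_n=\det(g_{i+j})_{0\le i,j\le n}$, $n\ge 0$. *)

(* Defs.v *)
From mathcomp Require Import all_boot all_order all_algebra.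
Set Implicit Arguments. Unset Strict Implicit. Unset Printing Implicit Defensive.
Import GRing.Theory Num.Theory.
Local Open Scope ring_scope.

(* The identity g = 1/D with
   D(x) = 1 - x/(1-x) - x^2 g(x) (D has constant term 1, hence is invertible)
   is equivalent to g * D = 1; the n-th coefficient of g * D is given below,
   using x/(1-x) = sum_{k>=1} x^k. *)
Definition gD_coef (g : nat -> rat) (n : nat) : rat :=
  g n - \sum_(1 <= k < n.+1) g (n - k)%N
      - \sum_(0 <= k < n.-1) g k * g (n - 2 - k)%N.

Definition is_g (g : nat -> rat) : Prop :=
  g 0%N = 1 /\ forall n : nat, gD_coef g n = (n == 0%N)%:R.

Definition hankel (g : nat -> rat) (n : nat) : rat :=
  \det (\matrix_(i < n.+1, j < n.+1) g (i + j)%N).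

(* Main.v *)
Require Import Defs.
From mathcomp Require Import all_boot all_order all_algebra.
From mathcomp Require Import ring lra zify.
Import GRing.Theory Num.Theory.
Local Open Scope ring_scope.

Definition ccn (k : nat) : nat := if odd k then 2 else 1.
Definition cc (k : nat) : rat := (ccn k)%:R.

Fixpoint Lt (n k : nat) : rat :=
  match n with
  | 0 => (k == 0)%:R
  | n'.+1 => (match k with 0 => 0 | k'.+1 => cc k * Lt n' k' end)
             + Lt n' k + Lt n' k.+1
  end.

Definition Lm (i k : nat) : rat := match k with 0 => 0 | k'.+1 => cc k * Lt i k' end.

Definition EE (k : nat) : rat := (2 ^+ uphalf k)^-1.

Lemma LtS n k : Lt n.+1 k = Lm n k + Lt n k + Lt n k.+1.
Proof. by []. Qed.

Lemma Lt_up n k : (n < k)%N -> Lt n k = 0.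
Proof.
elim: n k => [|n IH] k H; first by case: k H.
rewrite LtS /Lm; case: k H => [//|k] H.
rewrite (IH k) ?(IH k.+1) ?(IH k.+2); try lia. by rewrite mulr0 !addr0.
Qed.

Lemma Lt_diag n : Lt n n = 2 ^+ uphalf n.
Proof.
elim: n => [//|n IH].
rewrite LtS /Lm IH !Lt_up // addr0 addr0 /cc /ccn.
have -> : uphalf n.+1 = (n./2).+1 by [].
rewrite uphalf_half /=.
by case: (odd n) => /=; rewrite ?add0n ?add1n ?exprS ?mul1r.
Qed.

Lemma ccEE k : cc k.+1 * EE k.+1 = EE k.
Proof.
rewrite /cc /ccn /EE.
have -> : uphalf k.+1 = (k./2).+1 by [].
rewrite uphalf_half /=; case: (odd k) => /=.
  by rewrite mul1r.
rewrite add0n exprS invfM mulrA divff ?mul1r //.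
Qed.

Lemma sum_ext (F : nat -> rat) m N : (m <= N)%N -> (forall k, (m <= k)%N -> F k = 0) ->
  \sum_(k < N) F k = \sum_(k < m) F k.
Proof.
move=> le H; rewrite -(subnKC le); elim: (N - m)%N => [|d IH]; first by rewrite addn0.
by rewrite addnS big_ord_recr /= IH H ?addr0 //; lia.
Qed.

Lemma shiftL i j N : (i < N)%N ->
  \sum_(k < N.+1) Lm i k * Lt j k * EE k = \sum_(k < N.+1) Lt i k * Lt j k.+1 * EE k.
Proof.
move=> H; rewrite big_ord_recl /= mul0r mul0r add0r.
rewrite big_ord_recr /= Lt_up // !mul0r addr0.
apply: eq_bigr => k _; rewrite /Lm /bump /= ?add0n ?add1n -(ccEE k); ring.
Qed.

Lemma Msym N i j : (i + j < N)%N ->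
  \sum_(k < N) Lt i k * Lt j k * EE k = Lt (i + j) 0.
Proof.
elim: i j => [|i IH] j H.
  case: N H => [//|N] H; rewrite big_ord_recl /= big1 ?addr0.
    by rewrite /EE /= invr1 !mulr1 mul1r.
  by move=> k _; rewrite !mul0r.
have e : \sum_(k < N) Lt i.+1 k * Lt j k * EE k
       = \sum_(k < N) Lt i k * Lt j.+1 k * EE k.
  have HN : N = N.-1.+1 by lia.
  move: H; rewrite HN => H.
  rewrite (eq_bigr (fun k : 'I_N.-1.+1 => Lm i k * Lt j k * EE k
       + Lt i k * Lt j k * EE k + Lt i k.+1 * Lt j k * EE k)); last first.
    by move=> k _; rewrite LtS; ring.
  rewrite [RHS](eq_bigr (fun k : 'I_N.-1.+1 => Lm j k * Lt i k * EE k
       + Lt i k * Lt j k * EE k + Lt j k.+1 * Lt i k * EE k)); last first.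
    by move=> k _; rewrite LtS; ring.
  rewrite !big_split /= !shiftL; try lia.
  by rewrite -!big_split /=; apply: eq_bigr => k _; ring.
rewrite e IH; last by lia.
by rewrite addnS.
Qed.
Lemma hankel_det (g : nat -> rat) (Hg : forall n, g n = Lt n 0) n :
  hankel g n = \prod_(k < n.+1) 2 ^+ uphalf k.
Proof.
rewrite /hankel.
pose A := \matrix_(i < n.+1, k < n.+1) (Lt i k * EE k).
pose B := \matrix_(k < n.+1, j < n.+1) Lt j k.
have -> : \matrix_(i < n.+1, j < n.+1) g (i + j)%N = A *m B.
  apply/matrixP => i j; rewrite !mxE Hg -(@Msym (i + j).+1) //.
  rewrite [RHS](eq_bigr (fun k : 'I_n.+1 => Lt i k * EE k * Lt j k)); last first.
    by move=> k _; rewrite /A /B !mxE.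
  rewrite (@sum_ext (fun k => Lt i k * Lt j k * EE k) i.+1 (i + j).+1); first last.
  - by move=> k Hk; rewrite Lt_up ?mul0r.
  - lia.
  rewrite [RHS](@sum_ext (fun k => Lt i k * EE k * Lt j k) i.+1 n.+1).
  - by apply: eq_bigr => k _; ring.
  - by have := ltn_ord i; lia.
  - by move=> k Hk; rewrite Lt_up ?mul0r.
rewrite /A /B det_mulmx -[X in _ * X]det_tr !det_trig.
- rewrite (eq_bigr (fun _ => 1)); last first.
    by move=> k _; rewrite mxE Lt_diag /EE divff // expf_neq0.
  rewrite big1_eq mul1r; apply: eq_bigr => k _; by rewrite !mxE Lt_diag.
- by apply/is_trig_mxP => i j H; rewrite !mxE Lt_up.
- by apply/is_trig_mxP => i j H; rewrite !mxE Lt_up ?mul0r.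
Qed.

Lemma prod_exp n : \prod_(k < n.+1) (2 : rat) ^+ uphalf k = 2 ^+ ((n.+1 ^ 2) %/ 4)%N.
Proof.
elim: n => [|n IH]; first by rewrite big_ord1.
rewrite big_ord_recr /= IH -exprD; congr (_ ^+ _).
rewrite -divn2.
have := odd_double_half n; rewrite -divn2 -muln2.
rewrite !expnS !expn0 !muln1.
case: (odd n) => /= H; lia.
Qed.
Lemma low0 N (p : {poly rat}) : (forall i, (i < N)%N -> p`_i = 0) ->
  exists r, p = r * 'X^N.
Proof.
move=> H; exists (drop_poly N p).
rewrite -{1}(poly_take_drop N p).
have -> : take_poly N p = 0.
  by apply/polyP => i; rewrite coef_take_poly coef0; case: ifP => // /H.
by rewrite add0r.
Qed.

Section S.
Variable g : nat -> rat.
Hypothesis Hg : is_g g.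
Variable N : nat.

Definition G : {poly rat} := \poly_(i < N) g i.
Definition O : {poly rat} := \poly_(i < N) (1 : rat).
Definition H : {poly rat} := O + G.

Lemma Eo : exists r, O - (1 + 'X * O) = r * 'X^N.
Proof.
apply: low0 => i Hi; rewrite coefB coefD coef1 coefXM /O !coef_poly Hi.
case: i Hi => [|i] Hi /=; first by rewrite subrr.
by rewrite ifT; [rewrite add0r subrr | lia].
Qed.

Lemma Eg : exists r, G - (1 + 'X * O * G + 'X^2 * G ^+ 2) = r * 'X^N.
Proof.
apply: low0 => i Hi; rewrite coefB !coefD coef1 -mulrA coefXM coefXnM expr2.
have := (proj2 Hg) i; rewrite /gD_coef /G coef_poly Hi.
case: i Hi => [|i] Hi /=.
  by rewrite big_geq // big_geq // !subr0 => ->; rewrite subrr.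
rewrite big_add1 !big_mkord /= coefM => E.
have -> : \sum_(j < i.+1) O`_j * (\poly_(i0 < N) g i0)`_(i - j)
        = \sum_(j < i.+1) g (i.+1 - j.+1)%N.
  apply: eq_bigr => j _; rewrite /O !coef_poly subSS.
  have Hj := ltn_ord j.
  rewrite ifT; last lia. rewrite ifT; last lia. by rewrite mul1r.
move: E; set a := \sum_(_ < i.+1) _ => E.
case: i Hi a E => [|i] Hi a E /=.
  rewrite big_ord0 subr0 in E.
  by rewrite add0r addr0 E.
rewrite coefM.
have -> : \sum_(j < (i.+2 - 2).+1) (\poly_(i0 < N) g i0)`_j * (\poly_(i0 < N) g i0)`_(i.+2 - 2 - j)
   = \sum_(j < i.+1) g j * g (i.+2 - 2 - j)%N.
  have -> : (i.+2 - 2 = i)%N by lia.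
  apply: eq_bigr => j _; have Hj := ltn_ord j; rewrite !coef_poly.
  rewrite ifT; last lia. rewrite ifT; last lia. by [].
rewrite add0r; lra.
Qed.

Lemma E0 : exists r, G - (1 + 'X * G + 'X^2 * G * H) = r * 'X^N.
Proof.
have [ro eo] := Eo; have [rg eg] := Eg.
exists (rg + 'X * G * ro).
transitivity ((G - (1 + 'X * O * G + 'X^2 * G ^+ 2)) + 'X * G * (O - (1 + 'X * O))).
  rewrite /H; ring.
rewrite eo eg; ring.
Qed.

Lemma E1 : exists r, H - (2 + 'X * H + 'X^2 * G * H) = r * 'X^N.
Proof.
have [ro eo] := Eo; have [rg eg] := Eg.
exists (rg + ro + 'X * G * ro).
transitivity ((G - (1 + 'X * O * G + 'X^2 * G ^+ 2)) + (O - (1 + 'X * O))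
   + 'X * G * (O - (1 + 'X * O))).
  rewrite /H; ring.
rewrite eo eg; ring.
Qed.

Definition Q k : {poly rat} := 'X^k * G ^+ (k./2).+1 * H ^+ uphalf k.
Definition Z m : {poly rat} := 'X^(m.*2) * G ^+ m * H ^+ m.

Lemma Qev m : Q (m.*2) = Z m * G.
Proof.
rewrite /Q /Z uphalf_double.
have -> : (m.*2)./2 = m by have := half_bit_double m false.
rewrite exprS; ring.
Qed.

Lemma Qod m : Q (m.*2.+1) = Z m * ('X * G * H).
Proof.
rewrite /Q /Z.
have h : (m.*2.+1)./2 = m by have := half_bit_double m true.
have -> : uphalf (m.*2.+1) = m.+1 by rewrite uphalf_half h /= odd_double.
rewrite h.
rewrite !exprS; ring.
Qed.

Lemma ZS m : Z m.+1 = Z m * ('X^2 * G * H).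
Proof. rewrite /Z doubleS -addn2 exprD !exprS; ring. Qed.

Lemma Z0 : Z 0 = 1.
Proof. by rewrite /Z /= !expr0 !mul1r. Qed.

Definition Qm k : {poly rat} := match k with 0 => 0 | k'.+1 => Q k' *+ ccn k end.

Lemma Qrec k : exists r,
  Q k - (((k == 0)%:R)%:P + 'X * (Qm k + Q k + Q k.+1)) = r * 'X^N.
Proof.
have [r0 e0] := E0; have [r1 e1] := E1.
have [m [-> | ->]] : exists m, k = m.*2 \/ k = m.*2.+1.
- exists k./2; have := odd_double_half k; case: (odd k) => /= Hk; [right|left]; rewrite -muln2 in Hk *; lia.

- case: m => [|m].
  + exists r0; rewrite /= Qev Qod Z0 polyC1 -e0; ring.
  + exists (Z m * 'X * G * H * r1 * 0 + Z m * 'X^2 * G * H * r0).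
    rewrite doubleS /Qm /ccn /= odd_double /= -doubleS Qev ZS.
    rewrite -[Q m.*2.+1]/(Q m.*2.+1) Qod.
    have -> : Q (m.+1.*2).+1 = Z m.+1 * ('X * G * H) by rewrite Qod.
    rewrite ZS polyC0.
    transitivity (Z m * 'X^2 * G * H * (G - (1 + 'X * G + 'X^2 * G * H))).
      ring.
    rewrite e0; ring.
- exists (Z m * 'X * G * r1).
  rewrite /Qm /ccn /= odd_double /= Qev Qod -doubleS Qev ZS polyC0.
  transitivity (Z m * 'X * G * (H - (2 + 'X * H + 'X^2 * G * H))).
    ring.
  rewrite e1; ring.
Qed.

Lemma Qcoef n : (n < N)%N -> forall k, (Q k)`_n = Lt n k.
Proof.
elim: n => [|n IH] Hn k.
  case: k => [|k].
    rewrite -[Q 0]/(Q (0.*2)) Qev Z0 mul1r /G coef_poly Hn /=; exact: (proj1 Hg).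
  by rewrite /Q -!mulrA coefXnM.
have [r e] := Qrec k.
move/eqP: e; rewrite subr_eq => /eqP ->.
rewrite coefD coefMXn ifT // add0r coefD coefC /= add0r coefXM /=.
rewrite !coefD !IH; try lia.
rewrite /Qm; case: k => [|k]; first by rewrite coef0.
by rewrite coefMn IH ?mulr_natl /cc //; lia.
Qed.
End S.

Lemma gL (g : nat -> rat) (Hg : is_g g) n : g n = Lt n 0.
Proof.
rewrite -(@Qcoef g Hg n.+1 n (ltnSn n) 0).
by rewrite -[Q _ _ 0]/(Q g n.+1 (0.*2)) Qev Z0 mul1r /G coef_poly ltnSn.
Qed.

Theorem mainTheorem2 (g : nat -> rat) (Hg : is_g g) :
  (forall n : nat, hankel g n = 2 ^+ ((n.+1 ^ 2) %/ 4)%N) /\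
  (forall n : nat, (4 <= n)%N ->
     hankel g n = 4 * (hankel g (n - 2)%N) ^+ 2 / hankel g (n - 4)%N).
Proof.
have P1 : forall n : nat, hankel g n = 2 ^+ ((n.+1 ^ 2) %/ 4)%N.
  by move=> n; rewrite (@hankel_det g (@gL g Hg)) prod_exp.
split => // n Hn; rewrite !P1.
set a := ((n.+1 ^ 2) %/ 4)%N; set b := (((n - 2).+1 ^ 2) %/ 4)%N.
set c := (((n - 4).+1 ^ 2) %/ 4)%N.
have E : (a + c = 2 + b * 2)%N.
  rewrite /a /b /c !expnS !expn0 !muln1.
  have -> : n = (n - 4).+4 by lia.
  move: (n - 4)%N => m. rewrite !subSS !subn0. lia.
have E2 : (2 : rat) ^+ a * 2 ^+ c = 4 * (2 ^+ b) ^+ 2.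
  by rewrite -exprD E exprD -exprM mulnC.
by rewrite -E2 mulfK // expf_neq0.
Qed.
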